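(* Let $p$ be a prime. If $p\equiv -1\pmod 6$ and $p-4$ is prime, then $\frac{p+1}{3}-1$ is a twin-4 rank. If $p\equiv 1\pmod 6$ and $p+4$ is prime, then $\frac{p-1}{3}+1$ is a twin-4 rank.
   Context: An odd integer $t\geq 3$ is called a twin-4 rank if $3t-2$ and $3t+2$ are both prime; an odd integer $t\geq 3$ that is not a twin-4 rank is called a non-rank. *)

(* Defs.v *)
From mathcomp Require Import all_boot.

(* An odd integer t >= 3 is a twin-4 rank if 3t-2 and 3t+2 are both prime.
   Ranks are positive, so nat suffices; 3*t - 2 is not truncated since t >= 3. *)
Definition twin4_rank (t : nat) : bool :=
  [&& odd t, 3 <= t, prime (3 * t - 2) & prime (3 * t + 2)].

(* Main.v *)
Require Import Defs.
From mathcomp Require Import all_boot.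
From mathcomp Require Import zify.

Theorem corollary2p3 (p : nat) (hp : prime p) :
  (p %% 6 = 5 -> prime (p - 4) -> twin4_rank ((p + 1) %/ 3 - 1)) /\
  (p %% 6 = 1 -> prime (p + 4) -> twin4_rank ((p - 1) %/ 3 + 1)).
Proof.
have Hp := divn_eq p 6.
set k := p %/ 6 in Hp.
split => Hm Hq.
- have Ht : (p + 1) %/ 3 - 1 = k.*2.+1 by lia.
  rewrite /twin4_rank Ht /= odd_double /=.
  case: k Hp Ht => [|k] Hp Ht.
    by rewrite Hm /= in Hp; rewrite Hp in Hq.
  have -> : 3 * (k.+1).*2.+1 - 2 = p - 4 by lia.
  have -> : 3 * (k.+1).*2.+1 + 2 = p by lia.
  rewrite Hq hp andbT; lia.
- have Ht : (p - 1) %/ 3 + 1 = k.*2.+1 by lia.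
  rewrite /twin4_rank Ht /= odd_double /=.
  case: k Hp Ht => [|k] Hp Ht.
    by rewrite Hm /= in Hp; rewrite Hp in hp.
  have -> : 3 * (k.+1).*2.+1 - 2 = p by lia.
  have -> : 3 * (k.+1).*2.+1 + 2 = p + 4 by lia.
  rewrite Hq hp andbT; lia.
Qed.
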